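(* Fix $z\in\{0,1\}$ and let $(\hat w^{*+}_{z,ij})_{ij:Z_{ij}=z}$ be the solution of the program (P): minimize $\sum_{ij:Z_{ij}=z}\psi(w_{ij})$ subject to $\bigl|\sum_{ij:Z_{ij}=z}w_{ij}B_k(X_{ij})-B^*_k\bigr|\le\delta_k$ for $k=1,\dots,K$ and $w_{ij}\ge0$ for all $ij$ with $Z_{ij}=z$. Let $R=\{ij: Z_{ij}=z,\ \hat w^{*+}_{z,ij}\neq0\}$ be the set of units receiving non-zero weight. Consider the relaxed program (P$_R$) over the units in $R$ only and without the non-negativity constraint: minimize $\sum_{ij\in R}\psi(w_{ij})$ subject to $\bigl|\sum_{ij\in R}w_{ij}B_k(X_{ij})-B^*_k\bigr|\le\delta_k$ for $k=1,\dots,K$. Then solving (P) is equivalent to the two-step procedure (I) restrict to $R$, discarding all other units; (II) solve (P$_R$): the solution of (P$_R$), extended by zero outside $R$, coincides with the solution $\hat w^{*+}_{z}$ of (P).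
   Context: There are $m$ studies with $n=\sum_i n_i$ individuals in total; individual $ij$ has binary treatment $Z_{ij}$ and covariates $X_{ij}\in\mathbb{R}^p$; all sums over $ij$ are over these study individuals. $B=(B_1,\dots,B_K)^\top$ are basis functions of the covariates with $B_1\equiv1$; $B^*=(B^*_1,\dots,B^*_K)^\top\in\mathbb{R}^K$ is a target covariate profile with $B^*_1=1$; $\delta=(\delta_1,\dots,\delta_K)$ are tolerances with $\delta_k\ge0$ and $\delta_1=0$ (so the first constraint enforces $\sum w_{ij}=1$). $\psi:\mathbb{R}\to\mathbb{R}$ is a convex dispersion function (differentiable, with $\psi'$ invertible). *)

(* Defs.v *)
From HB Require Import structures.
From mathcomp Require Import all_boot all_order all_algebra.
From mathcomp Require Import reals topology normedtype derive.
Set Implicit Arguments. Unset Strict Implicit. Unset Printing Implicit Defensive.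
Import Order.TTheory GRing.Theory Num.Theory numFieldNormedType.Exports.
Local Open Scope ring_scope.

(* Individuals: individual ij = (i ; j) with i : 'I_m a study and j : 'I_(n i). *)
Definition indiv (m : nat) (n : 'I_m -> nat) : finType := {i : 'I_m & 'I_(n i)}.

Section Programs.
Variables (R : realType) (I : finType) (p K : nat).
Variables (Z : I -> bool) (X : I -> 'rV[R]_p) (z : bool).
Variables (B : 'I_K -> 'rV[R]_p -> R) (Bstar : 'I_K -> R) (delta : 'I_K -> R).
Variable psi : R -> R.

Definition convex_fun (f : R -> R) : Prop :=
  forall x y t, 0 <= t <= 1 -> f (t * x + (1 - t) * y) <= t * f x + (1 - t) * f y.

Definition feasibleP (w : I -> R) : Prop :=
  (forall k : 'I_K,
     `| \sum_(ij | Z ij == z) w ij * B k (X ij) - Bstar k | <= delta k) /\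
  (forall ij, Z ij == z -> 0 <= w ij).

Definition optP (w : I -> R) : Prop :=
  feasibleP w /\
  forall v, feasibleP v ->
    \sum_(ij | Z ij == z) psi (w ij) <= \sum_(ij | Z ij == z) psi (v ij).

Definition feasiblePR (Rs : {set I}) (w : I -> R) : Prop :=
  forall k : 'I_K,
    `| \sum_(ij in Rs) w ij * B k (X ij) - Bstar k | <= delta k.

Definition optPR (Rs : {set I}) (w : I -> R) : Prop :=
  feasiblePR Rs w /\
  forall v, feasiblePR Rs v ->
    \sum_(ij in Rs) psi (w ij) <= \sum_(ij in Rs) psi (v ij).

End Programs.

(* Main.v *)
Require Import Defs.
From HB Require Import structures.
From mathcomp Require Import all_boot all_order all_algebra.
From mathcomp Require Import reals topology normedtype derive.
From mathcomp Require Import ring lra.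
Import Order.TTheory GRing.Theory Num.Theory numFieldNormedType.Exports.
Local Open Scope ring_scope.

Lemma Dlin (R : realType) (s k a : R) :
  'D_1 (fun u : R => s * u + k) a = s.
Proof.
have H : is_derive a 1 (fun u : R => s * u + k) (s * 1 + 0).
  apply: is_deriveD.
by rewrite derive_val mulr1 addr0.
Qed.

Lemma conv_itv (R : realType) (psi : R -> R) : convex_fun psi ->
  forall p q r, p < q -> p <= r <= q ->
  psi r <= (q - r) / (q - p) * psi p + (1 - (q - r) / (q - p)) * psi q.
Proof.
move=> hc p q r pq /andP[pr rq].
have qp : q - p != 0 by rewrite subr_eq0 gt_eqF.
have qp0 : 0 < q - p by rewrite subr_gt0.
have e : r = (q - r) / (q - p) * p + (1 - (q - r) / (q - p)) * q.
  by field.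
rewrite {1}e; apply: hc; apply/andP; split.
  by rewrite divr_ge0 // ?subr_ge0 // ltW.
by rewrite ler_pdivrMr // mul1r; lra.
Qed.

Arguments conv_itv {R psi} _ {p q r}.
Lemma strict_mid (R : realType) (psi : R -> R) : convex_fun psi ->
  injective (derive1 psi) ->
  forall x y, x < y -> psi ((x + y) / 2) < (psi x + psi y) / 2.
Proof.
move=> hc hinv x y xy.
rewrite ltNge; apply/negP => hge.
have yx : y - x != 0 by rewrite subr_eq0 gt_eqF.
set s := (psi y - psi x) / (y - x).
pose c := fun u => s * u + (psi x - s * x).
have cx : c x = psi x by rewrite /c; ring.
have cy : c y = psi y by rewrite /c /s; field.
set m := (x + y) / 2.
have up : forall t, x <= t <= y -> psi t <= c t.
  move=> t xty; have H := conv_itv hc xy xty. apply: (le_trans H).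
  by rewrite le_eqVlt; apply/orP; left; apply/eqP; rewrite /c /s; field.
have cm : c m = (psi x + psi y) / 2 by rewrite /c /m /s; field.
have pm : psi m = c m.
  apply/eqP; rewrite eq_le up; last by rewrite /m; apply/andP; split; lra.
  by rewrite cm.
have eqc : forall t, x <= t <= y -> psi t = c t.
  move=> t /andP[xt ty]; apply/eqP; rewrite eq_le up ?xt ?ty //=.
  have [tm|mt] := leP t m.
    have ty' : t < y by rewrite /m in tm; lra.
    have tmy : t <= m <= y by apply/andP; split => //; rewrite /m; lra.
    have := conv_itv hc ty' tmy.
    set L := (y - m) / (y - t).
    have L0 : 0 < L by apply: divr_gt0; rewrite subr_gt0 /m; rewrite /m in tm; lra.
    have yt : y - t != 0 by rewrite subr_eq0 gt_eqF.
    have cL : c m = L * c t + (1 - L) * c y by rewrite /L /c; field.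
    rewrite pm cL cy => h.
    nra.
  have xt' : x < t by rewrite /m in mt; lra.
  have tmy : x <= m <= t by rewrite /m in mt *; apply/andP; split; lra.
  have := conv_itv hc xt' tmy.
  set L := (t - m) / (t - x).
  have L0 : 0 < 1 - L.
    have tx0 : 0 < t - x by rewrite subr_gt0.
    rewrite subr_gt0 ltr_pdivrMr // mul1r; rewrite /m in mt *; lra.
  have tx : t - x != 0 by rewrite subr_eq0 gt_eqF.
  have cL : c m = L * c x + (1 - L) * c t by rewrite /L /c; field.
  rewrite pm cL cx => h.
  nra.
set a := (x + m) / 2.
set b := (m + y) / 2.
have Da : forall u, x < u < y -> derive1 psi u = s.
  move=> u xuy; rewrite derive1E -(@Dlin R s (psi x - s * x) u).
  apply: near_eq_derive.
  have := near_in_itvoo xuy.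
  apply: filterS => w; rewrite in_itv /= => /andP[xw wy].
  by rewrite eqc // ?ltW ?xw ?wy.
have : a = b.
  apply: hinv; rewrite !Da //; rewrite /a /b /m; apply/andP; split; lra.
rewrite /a /b /m; lra.
Qed.
Arguments strict_mid {R psi} _ _ {x y}.
Theorem theorem1 (R : realType) (m : nat) (n : 'I_m -> nat) (p K : nat)
  (Z : indiv n -> bool) (X : indiv n -> 'rV[R]_p)
  (B : 'I_K.+1 -> 'rV[R]_p -> R) (Bstar : 'I_K.+1 -> R) (delta : 'I_K.+1 -> R)
  (psi : R -> R)
  (hB1 : forall x, B ord0 x = 1) (hBstar1 : Bstar ord0 = 1)
  (hdelta : forall k, 0 <= delta k) (hdelta1 : delta ord0 = 0)
  (hconv : convex_fun psi) (hdiff : forall x : R, derivable (psi : R -> R) x 1)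
  (hinv : injective (derive1 psi))
  (z : bool) (what : indiv n -> R) :
  optP Z X z B Bstar delta psi what ->
  let Rs := [set ij | (Z ij == z) && (what ij != 0)] in
  (exists v, optPR X B Bstar delta psi Rs v) /\
  (forall v, optPR X B Bstar delta psi Rs v ->
     forall ij, Z ij == z -> (if ij \in Rs then v ij else 0) = what ij).
Proof.
move=> [[hfeas hnn] hmin] Rs.
have split : forall F : indiv n -> R,
    \sum_(ij | Z ij == z) F ij =
    \sum_(ij in Rs) F ij + \sum_(ij | (Z ij == z) && (what ij == 0)) F ij.
  move=> F; rewrite (bigID (fun ij => what ij != 0)) /=; congr (_ + _).
    by apply: eq_bigl => ij; rewrite inE.
  by apply: eq_bigl => ij; rewrite negbK.
have wpos : forall ij, ij \in Rs -> 0 < what ij.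
  move=> ij; rewrite inE => /andP[hz hw]; rewrite lt_def hw /=; exact: hnn.
have sumB : forall k, \sum_(ij | Z ij == z) what ij * B k (X ij) =
                      \sum_(ij in Rs) what ij * B k (X ij).
  move=> k; rewrite split [X in _ + X]big1 ?addr0 // => ij /andP[_ /eqP ->]; exact: mul0r.
have optw : optPR X B Bstar delta psi Rs what.
  split; first by move=> k; rewrite -sumB; exact: hfeas.
  move=> v hv; rewrite leNgt; apply/negP => hlt.
  pose d := fun ij => v ij - what ij.
  pose S := \sum_(ij in Rs) `|d ij| / what ij.
  have S0 : 0 <= S by apply: sumr_ge0 => ij /wpos wp; rewrite divr_ge0 // ltW.
  pose t := (1 + S)^-1.
  have t0 : 0 < t by rewrite invr_gt0; lra.
  have t1 : t <= 1 by rewrite invf_le1; lra.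
  pose W := fun ij => if ij \in Rs then what ij + t * d ij else what ij.
  have featW : feasibleP Z X z B Bstar delta W.
    split.
      move=> k; rewrite split.
      have -> : \sum_(ij | (Z ij == z) && (what ij == 0)) W ij * B k (X ij) = 0.
        apply: big1 => ij /andP[_ /eqP h0].
        rewrite /W; case: ifP => hin; last by rewrite h0 mul0r.
        by move: (wpos _ hin); rewrite h0 ltxx.
      rewrite addr0.
      have -> : \sum_(ij in Rs) W ij * B k (X ij) =
          (1 - t) * \sum_(ij in Rs) what ij * B k (X ij) + t * \sum_(ij in Rs) v ij * B k (X ij).
        rewrite !mulr_sumr -big_split /=; apply: eq_bigr => ij hin.
        by rewrite /W hin /d; ring.
      have e : forall a b c : R, (1 - t) * a + t * b - c = (1 - t) * (a - c) + t * (b - c).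
        by move=> a b c; ring.
      rewrite e; apply: (le_trans (ler_normD _ _)).
      rewrite !normrM (gtr0_norm t0) (ger0_norm (_ : 0 <= 1 - t)); last lra.
      have h1 := hv k; have h2 := hfeas k; rewrite sumB in h2.
      have := ler_wpM2l (ltW t0) h1.
      have : 0 <= 1 - t by lra.
      move=> h1t; have := ler_wpM2l h1t h2.
      lra.
    move=> ij hz; rewrite /W; case: ifP => hin; last exact: hnn.
    have wp := wpos _ hin.
    have hq : `|d ij| / what ij <= S.
      rewrite /S (bigD1 ij) //= lerDl; apply: sumr_ge0 => i /andP[/wpos wpi _].
      by rewrite divr_ge0 // ltW.
    have e : `|d ij| = `|d ij| / what ij * what ij by rewrite divfK // gt_eqF.
    have htd : t * `|d ij| <= what ij.
      rewrite /t mulrC ler_pdivrMr; last lra.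
      rewrite {1}e; set q := `|d ij| / what ij in hq *; nra.
    have := ler_norm (- d ij); rewrite normrN => hn.
    nra.
  have := hmin W featW; rewrite !split.
  have -> : \sum_(ij | (Z ij == z) && (what ij == 0)) psi (W ij) =
            \sum_(ij | (Z ij == z) && (what ij == 0)) psi (what ij).
    apply: eq_bigr => ij /andP[_ /eqP h0]; rewrite /W; case: ifP => // hin.
    by move: (wpos _ hin); rewrite h0 ltxx.
  rewrite lerD2r.
  have : \sum_(ij in Rs) psi (W ij) <=
     t * \sum_(ij in Rs) psi (v ij) + (1 - t) * \sum_(ij in Rs) psi (what ij).
    rewrite !mulr_sumr -big_split /=; apply: ler_sum => ij hin.
    rewrite /W hin.
    have -> : what ij + t * d ij = t * v ij + (1 - t) * what ij by rewrite /d; ring.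
    by apply: hconv; rewrite ltW.
  nra.
split; first by exists what.
move=> v [hv hvmin] ij hz.
case: ifP => hin; last by move: hin; rewrite inE hz /= => /negbFE /eqP ->.
apply/eqP; rewrite -[_ == _]negbK; apply/negP => hne.
pose u := fun ij => (v ij + what ij) / 2.
have hu : feasiblePR X B Bstar delta Rs u.
  move=> k.
  have -> : \sum_(ij in Rs) u ij * B k (X ij) - Bstar k =
    (\sum_(ij in Rs) v ij * B k (X ij) - Bstar k) / 2 +
    (\sum_(ij in Rs) what ij * B k (X ij) - Bstar k) / 2.
    have -> : \sum_(ij in Rs) u ij * B k (X ij) =
       (\sum_(ij in Rs) v ij * B k (X ij)) / 2 + (\sum_(ij in Rs) what ij * B k (X ij)) / 2.
      rewrite !mulr_suml -big_split /=; apply: eq_bigr => i _; rewrite /u; ring.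
    by field.
    apply: (le_trans (ler_normD _ _)).
  rewrite !normrM (ger0_norm (_ : 0 <= 2^-1)) ?invr_ge0 ?ler0n //.
  have h1 := hv k; have h2 := (optw.1) k.
  lra.
have hmid : forall i, psi (u i) <= (psi (v i) + psi (what i)) / 2.
  move=> i; have := hconv (v i) (what i) 2^-1.
  have -> : 1 - 2^-1 = 2^-1 :> R by field.
  have -> : 2^-1 * v i + 2^-1 * what i = u i by rewrite /u; field.
  move=> h; apply: le_trans (h _) _; first by apply/andP; split; lra.
  lra.
have hstrict : psi (u ij) < (psi (v ij) + psi (what ij)) / 2.
  have [lt1|lt2|eq] := ltgtP (v ij) (what ij).
  - have := strict_mid hconv hinv lt1. rewrite /u. done.
  - have := strict_mid hconv hinv lt2.
    by rewrite /u addrC [psi (what ij) + _]addrC.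
  - by rewrite eq eqxx in hne.
have hsum : \sum_(i in Rs) psi (u i) <
    (\sum_(i in Rs) psi (v i) + \sum_(i in Rs) psi (what i)) / 2.
  rewrite mulrDl !mulr_suml -big_split /=.
  rewrite (bigD1 ij) //= [X in _ < X](bigD1 ij) //=.
  apply: ltr_leD; first by rewrite mulrDl in hstrict.
  apply: ler_sum => i _; rewrite -mulrDl; exact: hmid.
have h1 := hvmin what optw.1.
have h2 := optw.2 u hu.
lra.
Qed.
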